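(* Let $n\in\mathbb N$. Then $B_n^{[n-1]}=\{w_I:I\subseteq[n]\}$, and the map $\alpha:\mathsf T_n\cup\{\varnothing\}\to B_n^{[n-1]}$, $I\mapsto w_{g(I)}$, where $g(I)=\{n-j+1:j\in[n]\setminus I\}$, is an isomorphism of posets, where $B_n^{[n-1]}$ carries the Bruhat order and $\mathsf T_n\cup\{\varnothing\}$ carries the tableau order extended by $A\sqsubseteq\varnothing$ for all $A$.
   Context: Tableau order: for nonempty $A,B\subseteq[n]$, $A\sqsubseteq B$ iff there is a two-column semistandard Young tableau with first column entry set $A$ and second column entry set $B$ (equivalently $\#A\ge\#B$ and $A(k)\le B(k)$ for $k\le\#B$, $A(k)$ the $k$-th smallest element); $\mathsf T_n=(2^{[n]}\setminus\{\varnothing\},\sqsubseteq)$. $B_n$ is the hyperoctahedral Coxeter group with simple reflections $s_0,\dots,s_{n-1}$ and relations $s_j^2=1$, $(s_0s_1)^4=1$, $(s_is_{i+1})^3=1$ for $i\in[n-2]$, $(s_js_k)^2=1$ for $|j-k|\ge2$; $\ell$ is its Coxeter length. $B_n^{[n-1]}=\{w\in B_n:\ell(w)<\ell(ws_i)\ \forall i\in[n-1]\}$, with the restriction of the Bruhat order ($u\le w$ iff some reduced word for $w$ contains a subword that is a reduced word for $u$). Define $w_1=s_0$, $w_{k+1}=s_kw_k$ for $k\in[n-1]$, and for $I=\{i_1<\dots<i_m\}\subseteq[n]$, $w_I=w_{i_1}\cdots w_{i_m}$ ($w_\varnothing=1$). *)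

(* Defs.v *)
From mathcomp Require Import all_boot all_order all_fingroup.
Set Implicit Arguments. Unset Strict Implicit. Unset Printing Implicit Defensive.

(* The hyperoctahedral group B_n, realized faithfully as the group of signed
   permutations of [n]: permutations of {+,-} x [n] (bool * 'I_n), with the
   Coxeter generators s_0 = sign change of the first letter and
   s_i (1 <= i <= n-1) = simultaneous transposition of letters i and i+1
   (letters are 0-indexed in 'I_n, so letter k+1 is the ordinal k). *)
Definition SP (n : nat) := {perm (bool * 'I_n)}.

Local Open Scope group_scope.

Definition sgen (n i : nat) : SP n :=
  match @insub _ (fun k => k < n) _ i.-1, @insub _ (fun k => k < n) _ i with
  | Some a, Some b =>
      if i == 0 then tperm (false, b) (true, b)
      else tperm (false, a) (false, b) * tperm (true, a) (true, b)
  | _, _ => 1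
  end.

Definition valid_word (n : nat) (w : seq nat) : bool := all (fun i => i < n) w.

Definition eval_word (n : nat) (w : seq nat) : SP n := \prod_(i <- w) sgen n i.

Definition inBn (n : nat) (x : SP n) : Prop :=
  exists w, valid_word n w /\ eval_word n w = x.

Definition reduced (n : nat) (w : seq nat) : Prop :=
  valid_word n w /\
  forall w', valid_word n w' -> eval_word n w' = eval_word n w -> size w <= size w'.

Definition coxlen (n : nat) (x : SP n) (k : nat) : Prop :=
  exists w, reduced n w /\ eval_word n w = x /\ size w = k.

Definition inBnQ (n : nat) (x : SP n) : Prop :=
  inBn x /\
  forall i, 1 <= i < n ->
    forall k k', coxlen x k -> coxlen (x * sgen n i) k' -> k < k'.

Definition bruhat (n : nat) (u w : SP n) : Prop :=
  exists a b, [/\ reduced n a, eval_word n a = w, reduced n b,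
                 eval_word n b = u & subseq b a].

(* Subsets of [n] are represented as {set 'I_n}; the ordinal k stands for the
   element k+1 of [n]. *)
Definition sorted_elems (n : nat) (A : {set 'I_n}) : seq nat :=
  sort leq [seq val i | i <- enum A].

(* A(k), 0-indexed *)
Definition kth (n : nat) (A : {set 'I_n}) (k : nat) : nat := nth 0 (sorted_elems A) k.

Definition tab_le (n : nat) (A B : {set 'I_n}) : bool :=
  (B == set0) ||
  [&& A != set0, #|B| <= #|A| & all (fun k => kth A k <= kth B k) (iota 0 #|B|)].

(* w_{k+1} = s_k s_{k-1} ... s_1 s_0, as a word; argument j stands for k+1 = j+1 *)
Definition wword (j : nat) : seq nat := rev (iota 0 j.+1).

Definition wI (n : nat) (I : {set 'I_n}) : SP n :=
  eval_word n (flatten [seq wword j | j <- sorted_elems I]).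

(* g(I) = {n - j + 1 : j in [n] \ I}; with 0-indexing this is rev_ord on ~: I *)
Definition gmap (n : nat) (I : {set 'I_n}) : {set 'I_n} := [set rev_ord j | j in ~: I].

Definition alpha (n : nat) (I : {set 'I_n}) : SP n := wI (gmap I).

(* Main.v *)
Require Import Defs.
From mathcomp Require Import all_boot all_order all_fingroup zify.
Set Implicit Arguments. Unset Strict Implicit. Unset Printing Implicit Defensive.

Module Aux.
Local Open Scope group_scope.


Section Code.
Variable n : nat.
Local Notation T := (bool * 'I_n)%type.

Definition code (p : T) : nat := if p.1 then n - 1 - p.2 else n + p.2.
Definition negT (p : T) : T := (~~ p.1, p.2).

Lemma code_inj : injective code.
Proof.
move=> [[] a] [[] b]; rewrite /code /= => h; have := ltn_ord a; have := ltn_ord b;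
  move=> ? ?; try (congr pair; apply: val_inj => /=; lia); lia.
Qed.

Lemma code_lt p : code p < n + n.
Proof. case: p => [[] a]; rewrite /code /=; have := ltn_ord a; lia. Qed.

Lemma code_neg p : code (negT p) = n + n - 1 - code p.
Proof. case: p => [[] a]; rewrite /code /=; have := ltn_ord a; lia. Qed.

Lemma negTK : involutive negT.
Proof. by case=> b a; rewrite /negT /= negbK. Qed.

Lemma code_negT_lt p : (code (negT p) < code p) = ~~ p.1.
Proof. case: p => [[] a]; rewrite /code /=; have := ltn_ord a; lia. Qed.

Lemma code_lt_neg p q : (code (negT p) < code (negT q)) = (code q < code p).
Proof. rewrite !code_neg; have := code_lt p; have := code_lt q; lia. Qed.

Definition symm (x : SP n) := forall p, x (negT p) = negT (x p).

Lemma symm1 : symm 1.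
Proof. by move=> p; rewrite !perm1. Qed.

Lemma symmM x y : symm x -> symm y -> symm (x * y).
Proof. by move=> hx hy p; rewrite !permM hx hy. Qed.

Lemma symmV x : symm x -> symm x^-1.
Proof.
move=> hx p; apply: (@perm_inj _ x); by rewrite permKV hx permKV.
Qed.

Lemma tperm_negT (a b : T) p : tperm (negT a) (negT b) (negT p) = negT (tperm a b p).
Proof.
have ni := can_inj negTK.
case: (tpermP a b p) => [->|->|/eqP pa /eqP pb]; first by rewrite tpermL.
  by rewrite tpermR.
by rewrite tpermD // (inj_eq ni) eq_sym.
Qed.

Lemma symm_tpermN a : symm (tperm a (negT a)).
Proof. by move=> p; rewrite -tperm_negT negTK tpermC. Qed.

Lemma tperm_comm (a b c d p : T) : a != c -> a != d -> b != c -> b != d ->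
  tperm a b (tperm c d p) = tperm c d (tperm a b p).
Proof.
move=> ac ad bc bd.
case: (tpermP c d p) => [->|->|/eqP pc /eqP pd].
- by rewrite (tpermD ac bc) tpermL (tpermD ad bd).
- by rewrite (tpermD ad bd) tpermR (tpermD ac bc).
case: (tpermP a b p) => [ea|eb|pa pb]; rewrite tpermD //; by rewrite eq_sym.
Qed.

Lemma symm_tpair (a b : 'I_n) :
  symm (tperm ((false, a) : T) (false, b) * tperm ((true, a) : T) (true, b)).
Proof.
move=> p; rewrite !permM.
have e1 : forall q, tperm ((false, a) : T) (false, b) (negT q) = negT (tperm (true, a) (true, b) q).
  by move=> q; rewrite -tperm_negT.
have e2 : forall q, tperm ((true, a) : T) (true, b) (negT q) = negT (tperm (false, a) (false, b) q).
  by move=> q; rewrite -tperm_negT.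
rewrite e1 e2 tperm_comm //.
Qed.

Lemma symm_sgen i : symm (sgen n i).
Proof.
rewrite /sgen; case: (insub i.-1 : option 'I_n) => [a|]; last exact: symm1.
case: (insub i : option 'I_n) => [b|]; last exact: symm1.
case: eqP => _; first exact: (symm_tpermN (false, b)).
exact: symm_tpair.
Qed.

Lemma symm_eval w : symm (eval_word n w).
Proof.
rewrite /eval_word; elim: w => [|i w IH]; first by rewrite big_nil; exact: symm1.
by rewrite big_cons; apply: symmM => //; exact: symm_sgen.
Qed.

End Code.


Section Inv.
Variable n : nat.
Local Notation T := (bool * 'I_n)%type.
Local Notation code := (@code n).

Definition invs (x : SP n) : {set T * T} :=
  [set pq | (code pq.1 < code pq.2) && (code (x pq.2) < code (x pq.1))].
Definition inv x := #|invs x|.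

Lemma code_eq (u v : T) : (u == v) = (code u == code v).
Proof. by rewrite (inj_eq (@code_inj n)). Qed.

Lemma tau_ord (c d u v : T) : code d = (code c).+1 ->
  ~~ ((u == c) && (v == d)) -> ~~ ((u == d) && (v == c)) ->
  (code (tperm c d u) < code (tperm c d v)) = (code u < code v).
Proof.
move=> hcd h1 h2.
case: (tpermP c d u) => [eu|eu|/eqP uc /eqP ud]; case: (tpermP c d v) => [ev|ev|/eqP vc /eqP vd];
  subst; rewrite ?eqxx ?andbT ?andTb /= in h1 h2 *;
  repeat match goal with H : is_true (_ != _) |- _ => rewrite code_eq in H end;
  repeat match goal with H : is_true (~~ _) |- _ => rewrite ?code_eq in H end; lia.
Qed.

Lemma invs_tperm (x : SP n) (c d : T) : code d = (code c).+1 -> code (x^-1 c) < code (x^-1 d) ->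
  invs (x * tperm c d) = (x^-1 c, x^-1 d) |: invs x /\ (x^-1 c, x^-1 d) \notin invs x.
Proof.
move=> hcd hlt; split; last by rewrite inE /= !permKV hcd; lia.
apply/setP => -[p q]; rewrite !inE /= !permM.
case: eqP => [[-> ->]|neq]; first by rewrite !permKV tpermL tpermR hcd hlt /=; lia.
case hpq: (code p < code q) => //=.
rewrite tau_ord //; apply/negP => /andP [/eqP e1 /eqP e2].
  have ep : p = x^-1 d by rewrite -e2 permK.
  have eq' : q = x^-1 c by rewrite -e1 permK.
  by rewrite ep eq' in hpq; lia.
have ep : p = x^-1 c by rewrite -e2 permK.
have eq' : q = x^-1 d by rewrite -e1 permK.
by apply: neq; rewrite ep eq'.
Qed.

Lemma inv_tperm (x : SP n) (c d : T) : code d = (code c).+1 -> code (x^-1 c) < code (x^-1 d) ->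
  inv (x * tperm c d) = (inv x).+1.
Proof.
by move=> hcd hlt; have [e hn] := invs_tperm hcd hlt; rewrite /inv e cardsU1 hn.
Qed.

End Inv.


Section Gen.
Variable n : nat.
Local Notation T := (bool * 'I_n)%type.
Local Notation code := (@code n).

Lemma sgen_cases i : i < n ->
  (i = 0 /\ exists b : 'I_n, nat_of_ord b = 0 /\ sgen n i = tperm ((false, b) : T) (true, b)) \/
  (0 < i /\ exists a b : 'I_n, [/\ nat_of_ord a = i.-1, nat_of_ord b = i &
       sgen n i = tperm ((false, a) : T) (false, b) * tperm ((true, a) : T) (true, b)]).
Proof.
move=> hi; have h1 : i.-1 < n by lia.
rewrite /sgen (insubT (fun k => k < n) h1) (insubT (fun k => k < n) hi).
case: eqP => [e|ne]; [left | right]; split => //.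
  by exists (Sub i hi); split => //.
  by lia.
by exists (Sub i.-1 h1), (Sub i hi).
Qed.


Definition gpair (i : nat) (c d : T) : bool :=
  if i == 0 then [&& c.1, ~~ d.1, nat_of_ord c.2 == 0 & nat_of_ord d.2 == 0]
  else [&& ~~ c.1, ~~ d.1, nat_of_ord c.2 == i.-1 & nat_of_ord d.2 == i].

Lemma gpair_ex i : i < n -> exists c d, gpair i c d.
Proof.
move=> hi; have h1 : i.-1 < n by lia.
exists (if i == 0 then (true, Ordinal hi) else (false, Ordinal h1)), (false, Ordinal hi).
rewrite /gpair; case: eqP => [e|ne] /=; first by rewrite e.
by rewrite !eqxx.
Qed.

Lemma gpair_code i c d : gpair i c d -> code d = (code c).+1.
Proof.
case: c d => [bc c] [bd d]; rewrite /gpair /code /=; have := ltn_ord c; have := ltn_ord d.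
case: eqP => hi0; case: bc; case: bd => //= ? ? /andP [/eqP ? /eqP ?]; lia.
Qed.

Lemma sgen_invol i p : sgen n i (sgen n i p) = p.
Proof.
rewrite /sgen; case: (insub i.-1 : option 'I_n) => [a|]; last by rewrite !perm1.
case: (insub i : option 'I_n) => [b|]; last by rewrite !perm1.
case: eqP => _; first by rewrite tpermK.
rewrite !permM tperm_comm ?tpermK ?tpermK //; apply/eqP; case.
Qed.

Lemma gpair_sgen i c d : i < n -> gpair i c d -> sgen n i c = d /\ sgen n i d = c.
Proof.
move=> hi; case: (sgen_cases hi) => [[-> [b [vb ->]]]|[ip [a [b [va vb ->]]]]].
  case: c d => [bc c] [bd d]; rewrite /gpair /= => /and4P [-> /negbTE -> /eqP c0 /eqP d0].
  have -> : c = b by apply: val_inj => /=; lia.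
  have -> : d = b by apply: val_inj => /=; lia.
  by rewrite tpermL tpermR.
rewrite /gpair (_ : (i == 0) = false); last by apply/eqP; lia.
case: c d => [bc c] [bd d]; rewrite /= => /and4P [/negbTE -> /negbTE -> /eqP c0 /eqP d0].
have -> : c = a by apply: val_inj => /=; lia.
have -> : d = b by apply: val_inj => /=; lia.
rewrite !permM tpermL tpermR !tpermD //; apply/eqP; case.
Qed.

Lemma inv_mul_sgen (x : SP n) i c d : i < n -> gpair i c d ->
  (x * sgen n i)^-1 c = x^-1 d /\ (x * sgen n i)^-1 d = x^-1 c.
Proof.
move=> hi hp; have [e1 e2] := gpair_sgen hi hp.
split; apply: (@perm_inj _ (x * sgen n i)); by rewrite permKV permM permKV.
Qed.

Lemma mul_sgenK (x : SP n) i : x * sgen n i * sgen n i = x.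
Proof. by apply/permP => p; rewrite !permM sgen_invol. Qed.

End Gen.



Section Len.
Variable n : nat.
Local Notation T := (bool * 'I_n)%type.
Local Notation code := (@code n).

Definition negc (x : SP n) := #|[set q : 'I_n | (x (false, q)).1]|.
Definition Dl (x : SP n) := inv x + negc x.

Lemma negc_tperm_same (x : SP n) (c d : T) : c.1 = d.1 -> negc (x * tperm c d) = negc x.
Proof.
move=> e; rewrite /negc; apply: eq_card => q; rewrite !inE permM.
by case: tpermP => [->|->|].
Qed.

Lemma symm_invE (x : SP n) p : symm x -> x^-1 (negT p) = negT (x^-1 p).
Proof. by move=> hx; apply: symmV. Qed.

Lemma negc_s0 (x : SP n) (b : 'I_n) : symm x ->
  code (x^-1 (true, b)) < code (x^-1 (false, b)) ->
  negc (x * tperm (true, b) (false, b)) = (negc x).+1.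
Proof.
move=> hx hlt.
set q0 := (x^-1 (false, b)).
have hc' : x^-1 (true, b) = negT q0 by rewrite -symm_invE.
have q0s : q0.1 = false by apply/negbTE; rewrite -code_negT_lt -hc'.
have eq0 : q0 = (false, q0.2) by rewrite -q0s -surjective_pairing.
have xq0 : x (false, q0.2) = (false, b) by rewrite -eq0 permKV.
rewrite /negc (_ : [set q | ((x * tperm (true, b) (false, b)) (false, q)).1] =
    q0.2 |: [set q | (x (false, q)).1]); last first.
  apply/setP => q; rewrite !inE permM.
  case: (eqVneq q q0.2) => [->|ne]; first by rewrite xq0 tpermR.
  rewrite tpermD //=.
    apply/eqP => h; have : (false, q) = x^-1 (true, b) by rewrite h permK.
    by rewrite hc' /negT q0s.
  apply/eqP => h; have : (false, q) = q0 by rewrite /q0 h permK.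
  by rewrite eq0 => -[e']; apply: (negP ne); rewrite -e'.
by rewrite cardsU1 inE xq0.
Qed.

Lemma Dstep (x : SP n) i c d : symm x -> i < n -> gpair i c d ->
  code (x^-1 c) < code (x^-1 d) -> Dl (x * sgen n i) = (Dl x).+2.
Proof.
move=> hx hi hp hlt; have hcd := gpair_code hp.
case: (sgen_cases hi) => [[i0 [b [vb e]]]|[ip [a [b [va vb e]]]]]; rewrite e.
- move: hp hlt hcd; rewrite /gpair i0 /=; case: c d => [bc c] [bd d] /= /and4P [hc hd /eqP c0 /eqP d0].
  have ec : c = b by apply: val_inj => /=; lia.
  have ed : d = b by apply: val_inj => /=; lia.
  move: hc hd; subst c d => -> /negbTE -> hlt hcd.
  rewrite tpermC /Dl inv_tperm //.
  by rewrite negc_s0 //; lia.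
- move: hp hlt hcd; rewrite /gpair (_ : (i == 0) = false) /=; last by apply/eqP; lia.
  case: c d => [bc c] [bd d] /= /and4P [/negbTE hc /negbTE hd /eqP c0 /eqP d0].
  have ec : c = a by apply: val_inj => /=; lia.
  have ed : d = b by apply: val_inj => /=; lia.
  subst c d bc bd => hlt hcd.
  rewrite mulgA /Dl [tperm (true, a) _]tpermC inv_tperm; last first.
  + rewrite !invMg !permM tpermV tpermD ?tpermD //.
    rewrite -[(true, a)]/(negT (false, a)) -[(true, b)]/(negT (false, b)) !symm_invE //.
    by rewrite code_lt_neg.
  + rewrite /code /=; have := ltn_ord a; have := ltn_ord b; lia.
  rewrite inv_tperm // !negc_tperm_same //; lia.
Qed.

End Len.


Section Len2.
Variable n : nat.
Local Notation T := (bool * 'I_n)%type.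
Local Notation code := (@code n).

Lemma gpair_neq i c d : gpair i c d -> code (c : T) != code d.
Proof. move=> /gpair_code ->; apply/eqP; lia. Qed.

Lemma Dstep_down (x : SP n) i c d : symm x -> i < n -> gpair i c d ->
  code (x^-1 d) < code (x^-1 c) -> Dl x = (Dl (x * sgen n i)).+2.
Proof.
move=> hx hi hp hlt.
have [e1 e2] := inv_mul_sgen x hi hp.
have := Dstep (symmM hx (@symm_sgen n i)) hi hp.
by rewrite e1 e2 mul_sgenK => ->.
Qed.

Lemma Dl1 : Dl (1 : SP n) = 0.
Proof.
rewrite /Dl /inv /negc; apply/eqP; rewrite addn_eq0; apply/andP; split; apply/eqP; apply/eqP;
  rewrite cards_eq0; apply/eqP/setP => p; rewrite !inE ?perm1 //.
by apply/negP => /andP [h1 h2]; lia.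
Qed.

Lemma eval_rcons w i : eval_word n (rcons w i) = eval_word n w * sgen n i.
Proof. by rewrite /eval_word -cats1 big_cat big_seq1. Qed.

Lemma eval_cat w1 w2 : eval_word n (w1 ++ w2) = eval_word n w1 * eval_word n w2.
Proof. by rewrite /eval_word big_cat. Qed.

Lemma eval_nil : eval_word n [::] = 1.
Proof. by rewrite /eval_word big_nil. Qed.

Lemma Dstep_any (x : SP n) i : symm x -> i < n ->
  Dl (x * sgen n i) = (Dl x).+2 \/ Dl x = (Dl (x * sgen n i)).+2.
Proof.
move=> hx hi; have [c [d hp]] := gpair_ex hi.
have hne := gpair_neq hp.
case: (ltngtP (code (x^-1 c)) (code (x^-1 d))) => h.
- by left; apply: (Dstep hx hi hp h).
- by right; apply: (Dstep_down hx hi hp h).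
- by move: hne; rewrite (perm_inj (code_inj h)) eqxx.
Qed.

Lemma D_le w : valid_word n w -> Dl (eval_word n w) <= 2 * size w.
Proof.
elim/last_ind: w => [|w i IH]; first by rewrite eval_nil Dl1.
rewrite /valid_word all_rcons => /andP [hi hw].
rewrite eval_rcons size_rcons.
have := IH hw; case: (Dstep_any (@symm_eval n w) hi) => ->; lia.
Qed.

Lemma code_surj k : k < n + n -> exists u : T, code u = k.
Proof.
move=> hk; case: (ltnP k n) => h.
  have h' : n - 1 - k < n by lia.
  by exists (true, Ordinal h'); rewrite /code /=; lia.
have h' : k - n < n by lia.
by exists (false, Ordinal h'); rewrite /code /=; lia.
Qed.

Lemma mono_ge (z : SP n) : (forall u v : T, code u < code v -> code (z u) < code (z v)) ->
  forall p, code p <= code (z p).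
Proof.
move=> hm; suff : forall k (p : T), code p = k -> k <= code (z p) by move=> h p; exact: h.
elim=> [//|k IH] p hp.
have [u hu] : exists u : T, code u = k by apply: code_surj; have := code_lt p; lia.
have := IH u hu; have := hm u p; rewrite hu hp; lia.
Qed.

Lemma mono_id (z : SP n) : (forall u v : T, code u < code v -> code (z u) < code (z v)) ->
  z = 1.
Proof.
move=> hm.
have hm' : forall u v : T, code u < code v -> code (z^-1 u) < code (z^-1 v).
  move=> u v huv; case: (ltngtP (code (z^-1 u)) (code (z^-1 v))) => // h.
    by have := hm _ _ h; rewrite !permKV; lia.
  by move: huv; rewrite -[u](permKV z) -[v](permKV z) (code_inj h); lia.
apply/permP => p; rewrite perm1; apply: code_inj.
have h1 := mono_ge hm p; have h2 := mono_ge hm' (z p); rewrite permK in h2; lia.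
Qed.

Lemma all_asc_id (x : SP n) : symm x ->
  (forall i c d, i < n -> gpair i c d -> code (x^-1 c) < code (x^-1 d)) -> x = 1.
Proof.
move=> hx ha.
have adj : forall u v : T, code v = (code u).+1 -> code (x^-1 u) < code (x^-1 v).
  move=> [bu a] [bv b] e; have ha' := ltn_ord a; have hb := ltn_ord b.
  case: bu e; case: bv => e; rewrite /code /= in e.
  - have := ha (nat_of_ord a) (false, b) (false, a) ha'.
    rewrite /gpair /= (_ : (nat_of_ord a == 0) = false); last by apply/eqP; lia.
    rewrite eqxx (_ : (nat_of_ord b == (nat_of_ord a).-1) = true); last by apply/eqP; lia.
    move=> /(_ isT).
    by rewrite -[(true, a)]/(negT (false, a)) -[(true, b)]/(negT (false, b)) !symm_invE // code_lt_neg.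
  - have := ha 0 (true, a) (false, b) (leq_ltn_trans (leq0n _) ha').
    rewrite /gpair /= (_ : (nat_of_ord a == 0) = true); last by apply/eqP; lia.
    rewrite (_ : (nat_of_ord b == 0) = true); last by apply/eqP; lia.
    by move=> /(_ isT).
  - exfalso; lia.
  - have := ha (nat_of_ord b) (false, a) (false, b) hb.
    rewrite /gpair /= (_ : (nat_of_ord b == 0) = false); last by apply/eqP; lia.
    rewrite eqxx (_ : (nat_of_ord a == (nat_of_ord b).-1) = true); last by apply/eqP; lia.
    by move=> /(_ isT).
have chain : forall k (u v : T), code v = code u + k.+1 -> code (x^-1 u) < code (x^-1 v).
  elim=> [|k IH] u v e; first by apply: adj; lia.
  have [w hw] : exists w : T, code w = code u + k.+1.
    by apply: code_surj; have := code_lt v; lia.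
  have h2 : code v = (code w).+1 by lia.
  have := IH u w hw; have := adj w v h2; lia.
have : x^-1 = 1.
  apply: mono_id => u v huv; apply: (chain (code v - code u).-1); lia.
by move/(congr1 (fun z => z^-1)); rewrite invgK invg1.
Qed.

End Len2.


Section Len3.
Variable n : nat.
Local Notation T := (bool * 'I_n)%type.
Local Notation code := (@code n).

Lemma desc_ex (x : SP n) : symm x -> x != 1 ->
  exists i c d, [/\ i < n, gpair i c d & code (x^-1 d) < code (x^-1 c)].
Proof.
move=> hx hne.
case: (boolP [exists i : 'I_n, exists c : T, exists d : T,
                gpair i c d && (code (x^-1 d) < code (x^-1 c))]).
  move=> /existsP [i /existsP [c /existsP [d /andP [h1 h2]]]].
  by exists (nat_of_ord i), c, d; split.
move=> hno; suff e1 : x = 1 by rewrite e1 eqxx in hne.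
apply: all_asc_id => // i c d hi hp.
have hne' := gpair_neq hp.
case: (ltngtP (code (x^-1 c)) (code (x^-1 d))) => // h.
  exfalso; move/negP: hno; apply; apply/existsP; exists (Ordinal hi).
  by apply/existsP; exists c; apply/existsP; exists d; rewrite hp h.
by move: hne'; rewrite (perm_inj (code_inj h)) eqxx.
Qed.

Lemma word_exists (x : SP n) : symm x ->
  exists w, [/\ valid_word n w, eval_word n w = x & (2 * size w)%N = Dl x].
Proof.
move=> hx; have [k hk] : exists k, Dl x <= k by exists (Dl x).
elim: k x hx hk => [|k IH] x hx hk.
  case: (eqVneq x 1) => [->|hne]; first by exists [::]; rewrite eval_nil Dl1.
  have [i [c [d [hi hp hlt]]]] := desc_ex hx hne.
  have := Dstep_down hx hi hp hlt; lia.
case: (eqVneq x 1) => [->|hne]; first by exists [::]; rewrite eval_nil Dl1.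
have [i [c [d [hi hp hlt]]]] := desc_ex hx hne.
have e := Dstep_down hx hi hp hlt.
have [w [hw ew sw]] := IH (x * sgen n i) (symmM hx (@symm_sgen n i)) ltac:(lia).
exists (rcons w i); split.
- by rewrite /valid_word all_rcons hi.
- by rewrite eval_rcons ew mul_sgenK.
- by rewrite size_rcons; lia.
Qed.

Lemma inBn_symm (x : SP n) : inBn x -> symm x.
Proof. by case=> w [_ <-]; exact: symm_eval. Qed.

Lemma reduced_iff w : reduced n w <-> valid_word n w /\ (2 * size w)%N = Dl (eval_word n w).
Proof.
split.
  case=> hv hmin; split => //.
  have [w' [hw' ew' sw']] := word_exists (@symm_eval n w).
  have := hmin w' hw' ew'; have := D_le hv; lia.
case=> hv hs; split => // w' hw' ew'.
have := D_le hw'; rewrite ew'; lia.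
Qed.

Lemma coxlen_iff (x : SP n) k : coxlen x k <-> inBn x /\ (2 * k)%N = Dl x.
Proof.
split.
  case=> w [/reduced_iff [hv hs] [ew sw]]; split; first by exists w.
  by rewrite -ew -sw.
case=> hx hk; have [w [hw ew sw]] := word_exists (inBn_symm hx).
exists w; split; last by split => //; lia.
by apply/reduced_iff; split => //; rewrite ew.
Qed.

Definition ascg (x : SP n) i := forall c d, gpair i c d -> code (x^-1 c) < code (x^-1 d).

Lemma inBn_mul (x : SP n) i : inBn x -> i < n -> inBn (x * sgen n i).
Proof.
case=> w [hw <-] hi; exists (rcons w i); split; last by rewrite eval_rcons.
by rewrite /valid_word all_rcons hi.
Qed.

Lemma inBnQ_iff (x : SP n) : inBnQ x <-> inBn x /\ forall i, 1 <= i < n -> ascg x i.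
Proof.
split.
  case=> hx hq; split => // i /andP [i1 hi] c d hp.
  have hne := gpair_neq hp.
  case: (ltngtP (code (x^-1 c)) (code (x^-1 d))) => // h.
    have e := Dstep_down (inBn_symm hx) hi hp h.
    have hx' := inBn_mul hx hi.
    have [w [_ _ sw]] := word_exists (inBn_symm hx).
    have [w' [_ _ sw']] := word_exists (inBn_symm hx').
    have := hq i ltac:(lia) (size w) (size w').
    rewrite !coxlen_iff; move=> /(_ (conj hx sw) (conj hx' sw')); lia.
  by move: hne; rewrite (perm_inj (code_inj h)) eqxx.
case=> hx ha; split => // i hi k k' /coxlen_iff [_ hk] /coxlen_iff [_ hk'].
have hi' : i < n by case/andP: hi.
have [c [d hp]] := gpair_ex hi'.
have := Dstep (inBn_symm hx) hi' hp (ha i hi c d hp); lia.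
Qed.

End Len3.


Ltac ifsimp := repeat match goal with |- context [if ?c then _ else _] =>
  first [ rewrite (_ : c = true); [|by lia] | rewrite (_ : c = false); [|by lia] ] end.

Section Act.
Variable n : nat.
Local Notation T := (bool * 'I_n)%type.
Local Notation code := (@code n).

Lemma pair_eq (p q : T) : (p == q) = (p.1 == q.1) && (nat_of_ord p.2 == q.2).
Proof.
case: p q => [b1 l1] [b2 l2] /=; apply/eqP/andP => [[-> ->]|[/eqP -> /eqP e]] //.
by congr pair; apply: val_inj.
Qed.

Lemma sgen_act i (v : T) : 0 < i < n ->
  (sgen n i v).1 = v.1 /\
  nat_of_ord (sgen n i v).2 =
    (if nat_of_ord v.2 == i.-1 then i else if nat_of_ord v.2 == i then i.-1 else v.2).
Proof.
case/andP=> i0 hi; case: (sgen_cases hi) => [[e _]|[_ [a [b [va vb ->]]]]]; first lia.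
case: v => bv l; rewrite permM !permE /= !pair_eq /=.
case: bv; case: (eqVneq (nat_of_ord l) (nat_of_ord a)) => ha;
  case: (eqVneq (nat_of_ord l) (nat_of_ord b)) => hb;
  rewrite /= ?ha ?hb ?eqxx ?(negbTE ha) ?(negbTE hb) /=; do ! (case: eqP => ? /=); split => //; lia.
Qed.

Lemma sgen_act0 (v : T) : 0 < n ->
  (sgen n 0 v).1 = (if nat_of_ord v.2 == 0 then ~~ v.1 else v.1) /\
  nat_of_ord (sgen n 0 v).2 = v.2.
Proof.
move=> hn; case: (sgen_cases hn) => [[_ [b [vb ->]]]|[? _]]; last lia.
case: v => bv l; rewrite permE /= !pair_eq /=.
case: bv => /=; do ! (case: eqP => ? /=); split => //; lia.
Qed.


Lemma wwordS j : wword j.+1 = j.+1 :: wword j.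
Proof. by rewrite /wword -addn1 iotaD rev_cat. Qed.

Lemma eval_cons i w (v : T) : eval_word n (i :: w) v = eval_word n w (sgen n i v).
Proof. by rewrite /eval_word big_cons permM. Qed.

Lemma eval_wword j (v : T) : j < n ->
  (eval_word n (wword j) v).1 = (if nat_of_ord v.2 == j then ~~ v.1 else v.1) /\ nat_of_ord (eval_word n (wword j) v).2 =
    (if v.2 < j then (nat_of_ord v.2).+1 else if nat_of_ord v.2 == j then 0 else v.2).
Proof.
elim: j v => [|j IH] v hj.
  rewrite /wword /= eval_cons eval_nil perm1.
  have [-> ->] := sgen_act0 v hj; split => //; case: ifP => //.
  by move/eqP->.
rewrite wwordS eval_cons.
have hb : 0 < j.+1 < n by lia.
have hj' : j < n by lia.
have [h1 h2] := sgen_act v hb.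
have [h3 h4] := IH (sgen n j.+1 v) hj'.
rewrite h3 h4 h1 h2 /=.
move: (nat_of_ord v.2) => k; case: v.1;
  have : k < j \/ k = j \/ k = j.+1 \/ j.+1 < k by lia.
  all: case=> [hk|[->|[->|hk]]]; ifsimp; split => //; lia.
Qed.

End Act.



Section Words.
Variable n : nat.
Local Notation T := (bool * 'I_n)%type.
Local Notation code := (@code n).

Lemma pair_ext (p q : T) : p.1 = q.1 -> nat_of_ord p.2 = nat_of_ord q.2 -> p = q.
Proof. by case: p q => [b1 l1] [b2 l2] /= -> e; congr pair; apply: val_inj. Qed.

Lemma sgenV_app i (v : T) : (sgen n i)^-1 v = sgen n i v.
Proof. by apply: (@perm_inj _ (sgen n i)); rewrite permKV sgen_invol. Qed.

Lemma invM_app (x y : SP n) v : (x * y)^-1 v = x^-1 (y^-1 v).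
Proof. by rewrite invMg permM. Qed.

Lemma eval_cons_g i w : eval_word n (i :: w) = sgen n i * eval_word n w.
Proof. by rewrite /eval_word big_cons. Qed.

Definition Hk (x : SP n) (kk : 'I_n) :=
  (forall l : 'I_n, l < kk -> code (x^-1 (false, l)) < code (x^-1 (false, kk))) /\
  (x^-1 (false, kk)).1 = false.

Lemma block k (kk : 'I_n) : nat_of_ord kk = k -> forall x : SP n, symm x -> Hk x kk ->
  Dl (x * eval_word n (wword k)) = Dl x + (k.+1 + k.+1).
Proof.
elim: k kk => [|k IH] kk ek x hx [h1 h2].
  rewrite /wword /= eval_cons_g eval_nil mulg1.
  have hp : gpair 0 (true, kk) (false, kk) by rewrite /gpair /= ek eqxx.
  have hn : 0 < n by rewrite -ek ltn_ord.
  rewrite (Dstep hx hn hp); first lia.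
  rewrite -[(true, kk)]/(negT (false, kk)) symm_invE // code_negT_lt h2 //.
have hk : k < n by have := ltn_ord kk; lia.
set k0 : 'I_n := Ordinal hk.
have hp : gpair k.+1 (false, k0) (false, kk) by rewrite /gpair /= ek !eqxx.
have hn : k.+1 < n by rewrite -ek ltn_ord.
rewrite wwordS eval_cons_g mulgA.
have hlt : code (x^-1 (false, k0)) < code (x^-1 (false, kk)) by apply: h1; rewrite /= ek.
rewrite (IH k0 erefl (x * sgen n k.+1)); last first.
- have [e1 e2] := inv_mul_sgen x hn hp.
  split; last by rewrite e1.
  move=> l hl; rewrite e1 invM_app sgenV_app.
  have [s1 s2] := sgen_act (false, l) (ltac:(lia) : 0 < k.+1 < n).
  have -> : sgen n k.+1 (false, l) = (false, l).
    by apply: pair_ext => //; move: hl => /= hl; rewrite s2 /=; ifsimp.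
  by apply: h1; rewrite ek; move: hl => /=; lia.
- exact: symmM hx (@symm_sgen n k.+1).
rewrite (Dstep hx hn hp hlt); lia.
Qed.

Definition Chain (x : SP n) := forall (p q : T) (l m : 'I_n),
  x p = (false, l) -> x q = (false, m) -> l < m -> code p < code q.

Definition Fix (x : SP n) b := forall j : 'I_n, b <= j -> x (false, j) = (false, j).

Lemma Fix_neg (x : SP n) b (j : 'I_n) : symm x -> Fix x b -> b <= j -> x (true, j) = (true, j).
Proof.
move=> hx hf hj; rewrite -[(true, j)]/(negT (false, j)) hx hf //.
Qed.

Lemma step (x : SP n) (bb : 'I_n) : symm x -> Chain x -> Fix x bb ->
  [/\ Chain (x * eval_word n (wword bb)), Fix (x * eval_word n (wword bb)) bb.+1,
      Dl (x * eval_word n (wword bb)) = Dl x + (bb.+1 + bb.+1) &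
      forall q, ((x * eval_word n (wword bb)) (false, q)).1 = (x (false, q)).1 || (q == bb)].
Proof.
move=> hx hc hf.
set e := eval_word n (wword bb).
have hb := ltn_ord bb.
have xb : x (false, bb) = (false, bb) by apply: hf; rewrite leqnn.
have xnb : x (true, bb) = (true, bb) by apply: (Fix_neg hx hf); rewrite leqnn.
have ev := fun v => eval_wword v hb.
split.
- move=> p q l m; rewrite !permM => ep eq hlm.
  have [u1 u2] := ev (x p); have [w1 w2] := ev (x q).
  rewrite ep /= in u1 u2; rewrite eq /= in w1 w2.
  have wpos : (x q).1 = false.
    move: w1 w2; case: ifP => [/eqP h|_ ->] //; rewrite ifN; first lia.
    by rewrite h ltnn.
  case: (boolP ((x p).1)) => hp1.
  +
    have epb : x p = (true, bb).
      apply: pair_ext => //=; move: u1; case: ifP => [/eqP -> //|_].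
      by rewrite hp1.
    have -> : p = (true, bb) by apply: (@perm_inj _ x); rewrite epb xnb.
    case: q eq wpos w1 w2 => [[] qi] eq wpos w1 w2.
    * rewrite /code /=; have := ltn_ord qi.
      case: (ltnP qi bb) => hqi; first lia.
      by move: wpos; rewrite (Fix_neg hx hf hqi).
    * rewrite /code /=; have := ltn_ord qi; lia.
  + have hp1' : (x p).1 = false by apply/negbTE.
    apply: (hc p q (x p).2 (x q).2).
    * by apply: pair_ext.
    * by apply: pair_ext.
    * move: u1 u2 w1 w2; rewrite hp1' wpos /=.
      move: (nat_of_ord (x p).2) (nat_of_ord (x q).2) => a c.
      have : a < bb \/ a = bb \/ bb < a by lia.
      have : c < bb \/ c = bb \/ bb < c by lia.
      case=> [hc'|[->|hc']]; case=> [ha|[->|ha]]; ifsimp; intros; try congruence;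
        move: hlm => /=; lia.
- move=> j hj; rewrite permM hf; last by lia.
  have [v1 v2] := ev (false, j).
  apply: pair_ext; rewrite ?v1 ?v2 /=; ifsimp => //.
- apply: block => //.
  split; last by rewrite -{1}xb permK.
  move=> l hl; apply: (hc _ _ l bb); rewrite ?permKV //.
- move=> q; rewrite permM.
  have [v1 _] := ev (x (false, q)).
  rewrite v1; case: eqP => [h|h].
    have eq : x (false, q) = (false, bb) \/ x (false, q) = (true, bb).
      case: (x (false, q)) h => [[] w] /= h; [right|left]; by apply: pair_ext.
    case: eq => eq.
      have -> : q = bb by have := congr1 (fun p => (x^-1 p)) eq; rewrite permK -xb permK => -[].
      by rewrite xb eqxx.
    by have := congr1 (fun p => (x^-1 p)) eq; rewrite permK -xnb permK.
  case: eqP => [hq|]; last by rewrite orbF.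
  by exfalso; apply: h; rewrite hq xb.
Qed.

End Words.


Lemma sorted_rcons_inv (L : seq nat) a :
  sorted ltn (rcons L a) -> sorted ltn L /\ all (fun y => y < a) L.
Proof.
move=> h; split; first exact: (subseq_sorted ltn_trans (subseq_rcons L a) h).
move: h; rewrite -rev_sorted rev_rcons /= => /(order_path_min (fun x y z h1 h2 => ltn_trans h2 h1)).
by rewrite all_rev.
Qed.

Lemma size_wword j : size (wword j) = j.+1.
Proof. by rewrite /wword size_rev size_iota. Qed.

Section WI.
Variable n : nat.
Local Notation T := (bool * 'I_n)%type.
Local Notation code := (@code n).

Definition FW (L : seq nat) := flatten (map wword L).

Lemma wI_inv L : sorted ltn L -> all (fun y => y < n) L -> forall b, all (fun y => y < b) L ->
  [/\ Chain (eval_word n (FW L)), Fix (eval_word n (FW L)) b,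
      Dl (eval_word n (FW L)) = (2 * size (FW L))%N &
      forall q : 'I_n, ((eval_word n (FW L)) (false, q)).1 = (nat_of_ord q \in L)].
Proof.
elim/last_ind: L => [|L a IH] hs hn b hb.
  rewrite /FW /= eval_nil Dl1; split => //.
  - move=> p q l m; rewrite !perm1 => -> -> /= hlm; rewrite /code /=; lia.
  - by move=> j _; rewrite perm1.
  - by move=> q; rewrite perm1.
have [hs' hall] := sorted_rcons_inv hs.
move: hn hb; rewrite !all_rcons => /andP [ha hn] /andP [hab hb].
have [c1 c2 c3 c4] := IH hs' hn a hall.
set x := eval_word n (FW L) in c1 c2 c3 c4.
have hx : symm x by apply: symm_eval.
have [d1 d2 d3 d4] := step (bb := Ordinal ha) hx c1 c2.
have eF : FW (rcons L a) = FW L ++ wword a by rewrite /FW map_rcons flatten_rcons.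
rewrite eF eval_cat -/x; split => //.
- by move=> j hj; apply: d2; move: hj => /=; lia.
- by rewrite d3 c3 size_cat size_wword /=; lia.
- by move=> q; rewrite d4 c4 mem_rcons in_cons orbC.
Qed.

End WI.


Section SE.
Variable n : nat.
Local Notation T := (bool * 'I_n)%type.
Local Notation code := (@code n).

Lemma se_sorted (A : {set 'I_n}) : sorted ltn (sorted_elems A).
Proof.
rewrite ltn_sorted_uniq_leq /sorted_elems sort_uniq (map_inj_uniq val_inj) enum_uniq /=.
exact: (sort_sorted leq_total).
Qed.

Lemma se_all (A : {set 'I_n}) : all (fun y => y < n) (sorted_elems A).
Proof. by apply/allP => y; rewrite mem_sort => /mapP [i _ ->]; exact: ltn_ord. Qed.

Lemma se_mem (A : {set 'I_n}) (q : 'I_n) : (nat_of_ord q \in sorted_elems A) = (q \in A).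
Proof. by rewrite mem_sort (mem_map val_inj) mem_enum. Qed.

Lemma se_size (A : {set 'I_n}) : size (sorted_elems A) = #|A|.
Proof. by rewrite size_sort size_map cardE. Qed.

Lemma se_count (A : {set 'I_n}) (P : pred nat) :
  count P (sorted_elems A) = #|[set j in A | P (nat_of_ord j)]|.
Proof.
rewrite /sorted_elems count_sort count_map -size_filter.
have -> : #|[set j in A | P (nat_of_ord j)]| = #|[seq j <- enum A | P (nat_of_ord j)]|.
  by apply: eq_card => j; rewrite inE mem_filter mem_enum andbC.
by symmetry; apply/card_uniqP; apply: filter_uniq; exact: enum_uniq.
Qed.

Lemma wI_props (I : {set 'I_n}) :
  [/\ Chain (wI I), symm (wI I),
      Dl (wI I) = (2 * size (FW (sorted_elems I)))%N &
      forall q : 'I_n, ((wI I) (false, q)).1 = (q \in I)].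
Proof.
have [c1 c2 c3 c4] := wI_inv (se_sorted I) (se_all I) (se_all I).
split => //; first exact: symm_eval.
by move=> q; rewrite c4 se_mem.
Qed.

Lemma chain_ascg (x : SP n) : Chain x -> forall i, 1 <= i < n -> ascg x i.
Proof.
move=> hc i hi [bc c] [bd d]; rewrite /gpair (_ : (i == 0) = false) /=; last by apply/eqP; lia.
move=> /and4P [/negbTE -> /negbTE -> /eqP ec /eqP ed].
apply: (hc _ _ c d); rewrite ?permKV //; lia.
Qed.

Lemma ascg_chain (x : SP n) : (forall i, 1 <= i < n -> ascg x i) -> Chain x.
Proof.
move=> ha.
have adj : forall l m : 'I_n, nat_of_ord m = l.+1 -> code (x^-1 (false, l)) < code (x^-1 (false, m)).
  move=> l m e; apply: (ha m); first by have := ltn_ord m; lia.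
  by rewrite /gpair /= e /= !eqxx.
have ch : forall k (l m : 'I_n), nat_of_ord m = l + k.+1 -> code (x^-1 (false, l)) < code (x^-1 (false, m)).
  elim=> [|k IH] l m e; first by apply: adj; lia.
  have hw : l + k.+1 < n by have := ltn_ord m; lia.
  have e' : nat_of_ord m = (nat_of_ord (Ordinal hw)).+1 by rewrite e /=; lia.
  have := IH l (Ordinal hw) erefl; have := adj (Ordinal hw) m e'.
  lia.
move=> p q l m ep eq hlm.
have -> : p = x^-1 (false, l) by rewrite -ep permK.
have -> : q = x^-1 (false, m) by rewrite -eq permK.
apply: (ch (m - l).-1); lia.
Qed.

Lemma uniq_aux (x y : SP n) (l : 'I_n) : Chain x -> Chain y ->
  (forall p, (x p).1 = (y p).1) ->
  (forall l' : 'I_n, l' < l -> x^-1 (false, l') = y^-1 (false, l')) ->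
  code (x^-1 (false, l)) < code (y^-1 (false, l)) -> False.
Proof.
move=> hcx hcy hs IH hlt.
set p := x^-1 (false, l); set q := y^-1 (false, l).
move: hlt; rewrite -/p -/q => hlt.
have xp : x p = (false, l) by rewrite permKV.
have yq : y q = (false, l) by rewrite permKV.
have yp1 : (y p).1 = false by rewrite -hs xp.
have yp : y p = (false, (y p).2) by rewrite -yp1 -surjective_pairing.
case: (ltngtP (nat_of_ord (y p).2) l) => h.
- have := IH _ h; rewrite -yp permK -/p => e.
  have e2 : y p = (false, l) by have := congr1 x e; rewrite permKV xp.
  by move: h; rewrite e2 /= ltnn.
- have := hcy q p l (y p).2 yq yp h; lia.
- have : y p = y q by rewrite yp yq; congr pair; apply: val_inj.
  by move/perm_inj => e; move: hlt; rewrite e ltnn.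
Qed.

Lemma uniq_chain (x y : SP n) : symm x -> symm y -> Chain x -> Chain y ->
  (forall q : 'I_n, (x (false, q)).1 = (y (false, q)).1) -> x = y.
Proof.
move=> hx hy hcx hcy hq.
have hs : forall p, (x p).1 = (y p).1.
  case=> [[] q]; last exact: hq.
  by rewrite -[(true, q)]/(negT (false, q)) hx hy /= hq.
have key : forall k (l : 'I_n), nat_of_ord l < k -> x^-1 (false, l) = y^-1 (false, l).
  elim=> [//|k IH] l hl.
  have IH' : forall l' : 'I_n, l' < l -> x^-1 (false, l') = y^-1 (false, l').
    by move=> l' h; apply: IH; lia.
  case: (ltngtP (code (x^-1 (false, l))) (code (y^-1 (false, l)))) => h.
  - by exfalso; exact: (uniq_aux hcx hcy hs IH' h).
  - exfalso; apply: (uniq_aux hcy hcx (fun p => esym (hs p))) h.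
    by move=> l' h'; rewrite IH'.
  - exact: code_inj.
have hinv : x^-1 = y^-1.
  apply/permP => -[[] l]; last exact: (key l.+1).
  by rewrite -[(true, l)]/(negT (false, l)) !symm_invE // (key l.+1).
by rewrite -(invgK x) hinv invgK.
Qed.

End SE.


Section Cnt.
Variable n : nat.
Local Notation T := (bool * 'I_n)%type.
Local Notation code := (@code n).

Definition cnt (x : SP n) (k th : nat) := #|[set p : T | (code p <= k) && (th <= code (x p))]|.
Definition PP (u w : SP n) := forall k th, cnt u k th <= cnt w k th.

Lemma cnt_split (x : SP n) k (v : T) :
  cnt x k (code v) = cnt x k (code v).+1 + (code (x^-1 v) <= k).
Proof.
rewrite /cnt.
set S := [set p : T | (code p <= k) && ((code v).+1 <= code (x p))].
case: (boolP (code (x^-1 v) <= k)) => h.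
  rewrite (_ : [set p : T | _] = x^-1 v |: S).
    by rewrite cardsU1 !inE permKV ltnn andbF addnC.
  apply/setP => p; rewrite !inE.
  case: (eqVneq p (x^-1 v)) => [->|ne]; first by rewrite permKV h leqnn.
  rewrite /=; case: (code p <= k) => //=; rewrite leq_eqVlt.
  case: eqP => //= e; exfalso; apply: (negP ne); apply/eqP.
  by rewrite (code_inj e) permK.
rewrite addn0; apply: eq_card => p; rewrite !inE.
case: (eqVneq p (x^-1 v)) => [->|ne]; first by rewrite (negbTE h).
case: (code p <= k) => //=; rewrite leq_eqVlt.
case: eqP => //= e; exfalso; apply: (negP ne); apply/eqP.
by rewrite (code_inj e) permK.
Qed.

Lemma cnt_tperm_other (x : SP n) (c d : T) k th : code d = (code c).+1 -> th != (code c).+1 ->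
  cnt (x * tperm c d) k th = cnt x k th.
Proof.
move=> hcd hth; apply: eq_card => p; rewrite !inE permM.
case: tpermP => [->|->|_ _] //; rewrite ?hcd; case: (code p <= k) => //=; move: hth => /eqP; lia.
Qed.

Lemma cnt_tperm (x : SP n) (c d : T) k : code d = (code c).+1 ->
  cnt (x * tperm c d) k (code d) + (code (x^-1 d) <= k) =
  cnt x k (code d) + (code (x^-1 c) <= k).
Proof.
move=> hcd.
have e1 := cnt_split (x * tperm c d) k c.
have e2 := cnt_split x k c.
have e3 : cnt (x * tperm c d) k (code c) = cnt x k (code c).
  by apply: cnt_tperm_other => //; apply/eqP; lia.
have e4 : (x * tperm c d)^-1 c = x^-1 d by rewrite invM_app tpermV tpermL.
rewrite e4 in e1; rewrite hcd; lia.
Qed.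

Lemma PP_refl u : PP u u. Proof. by move=> k th. Qed.
Lemma PP_trans u v w : PP u v -> PP v w -> PP u w.
Proof. by move=> h1 h2 k th; apply: leq_trans (h1 k th) (h2 k th). Qed.

Lemma PP_tperm (x : SP n) (c d : T) : code d = (code c).+1 ->
  code (x^-1 c) < code (x^-1 d) -> PP x (x * tperm c d).
Proof.
move=> hcd hlt k th.
case: (eqVneq th (code c).+1) => [->|hth]; last by rewrite cnt_tperm_other.
have := cnt_tperm x k hcd; rewrite hcd.
case: (leqP (code (x^-1 d)) k) => h1; case: (leqP (code (x^-1 c)) k) => h2 /=; lia.
Qed.

Lemma PP_lift (u w : SP n) (c d : T) : code d = (code c).+1 ->
  code (w^-1 c) < code (w^-1 d) -> PP u w -> PP (u * tperm c d) (w * tperm c d).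
Proof.
move=> hcd hlt hp k th.
case: (eqVneq th (code c).+1) => [->|hth]; last by rewrite !cnt_tperm_other.
have U := cnt_tperm u k hcd; have W := cnt_tperm w k hcd.
have U0 := cnt_split u k c; have W0 := cnt_split w k c.
have U2 := cnt_split u k d; have W2 := cnt_split w k d.
have P0 := hp k (code c); have P1 := hp k (code d); have P2 := hp k (code d).+1.
rewrite hcd in U W U2 W2 P1 P2 *.
move: U W U0 W0 U2 W2.
case: (leqP (code (u^-1 d)) k) => h1; case: (leqP (code (u^-1 c)) k) => h2;
case: (leqP (code (w^-1 d)) k) => h3; case: (leqP (code (w^-1 c)) k) => h4 /=; lia.
Qed.

End Cnt.


Lemma subseq_rcons_case (T : eqType) (b a : seq T) s : subseq b (rcons a s) ->
  subseq b a \/ exists b', b = rcons b' s /\ subseq b' a.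
Proof.
rewrite -subseq_rev rev_rcons.
case/lastP: b => [|b' x]; first by rewrite sub0seq; left.
rewrite rev_rcons /=; case: eqP => [->|_] h.
  by right; exists b'; split => //; rewrite -subseq_rev.
by left; rewrite -subseq_rev rev_rcons.
Qed.

Section Sub.
Variable n : nat.
Local Notation T := (bool * 'I_n)%type.
Local Notation code := (@code n).

Lemma PP_gen (w : SP n) i c d (u : SP n) : symm w -> i < n -> gpair i c d ->
  code (w^-1 c) < code (w^-1 d) ->
  PP w (w * sgen n i) /\ (PP u w -> PP (u * sgen n i) (w * sgen n i)).
Proof.
move=> hw hi hp hlt; have hcd := gpair_code hp.
case: (sgen_cases hi) => [[i0 [b [vb e]]]|[ip [a [b [va vb e]]]]]; rewrite e.
- move: hp hlt hcd; rewrite /gpair i0 /=; case: c d => [bc c] [bd d] /= /and4P [hc hd /eqP c0 /eqP d0].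
  have ec : c = b by apply: val_inj => /=; lia.
  have ed : d = b by apply: val_inj => /=; lia.
  move: hc hd; subst c d => -> /negbTE -> hlt hcd.
  rewrite tpermC; split; first exact: PP_tperm.
  exact: PP_lift.
- move: hp hlt hcd; rewrite /gpair (_ : (i == 0) = false) /=; last by apply/eqP; lia.
  case: c d => [bc c] [bd d] /= /and4P [/negbTE hc /negbTE hd /eqP c0 /eqP d0].
  have ec : c = a by apply: val_inj => /=; lia.
  have ed : d = b by apply: val_inj => /=; lia.
  subst c d bc bd => hlt hcd.
  have hcd2 : code ((true, a) : T) = (code ((true, b) : T)).+1.
    rewrite /code /=; have := ltn_ord a; have := ltn_ord b; lia.
  have hlt2 : code ((w * tperm (false, a) (false, b))^-1 (true, b)) <
              code ((w * tperm (false, a) (false, b))^-1 (true, a)).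
    rewrite !invM_app tpermV tpermD ?tpermD //.
    rewrite -[(true, a)]/(negT (false, a)) -[(true, b)]/(negT (false, b)) !symm_invE //.
    by rewrite code_lt_neg.
  rewrite [tperm (true, a) _]tpermC !mulgA; split.
    apply: PP_trans (PP_tperm hcd hlt) _.
    exact: PP_tperm hcd2 hlt2.
  by move=> h; apply: PP_lift hcd2 hlt2 _; apply: PP_lift hcd hlt h.
Qed.

Lemma subword_mono a : valid_word n a -> Dl (eval_word n a) = (2 * size a)%N ->
  forall b, subseq b a -> PP (eval_word n b) (eval_word n a).
Proof.
elim/last_ind: a => [|a s IH] hv hd b hb.
  by move: hb; rewrite subseq0 => /eqP ->; exact: PP_refl.
move: hv; rewrite /valid_word all_rcons => /andP [hs hv].
move: hd; rewrite eval_rcons size_rcons => hd.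
have hx := @symm_eval n a.
have hle := D_le hv.
have [c [d hp]] := gpair_ex hs.
have hne := gpair_neq hp.
have hlt : code ((eval_word n a)^-1 c) < code ((eval_word n a)^-1 d).
  case: (ltngtP (code ((eval_word n a)^-1 c)) (code ((eval_word n a)^-1 d))) => // h.
    have := Dstep_down hx hs hp h; lia.
  by move: hne; rewrite (perm_inj (code_inj h)) eqxx.
have hd' : Dl (eval_word n a) = (2 * size a)%N by have := Dstep hx hs hp hlt; lia.
have P1 := (PP_gen 1 hx hs hp hlt).1.
case: (subseq_rcons_case hb) => [h|[b' [-> h]]].
  by apply: PP_trans (IH hv hd' b h) P1.
by rewrite eval_rcons; apply: (PP_gen (eval_word n b') hx hs hp hlt).2; apply: IH.
Qed.

End Sub.


Section Main.
Variable n : nat.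
Local Notation T := (bool * 'I_n)%type.
Local Notation code := (@code n).

Lemma valid_FW L : all (fun y => y < n) L -> valid_word n (FW L).
Proof.
elim: L => [//|a L IH] /= /andP [ha hL]; rewrite /valid_word /FW /= all_cat.
apply/andP; split; last exact: IH hL.
by apply/allP => y; rewrite /wword mem_rev mem_iota => /andP [_ hy]; lia.
Qed.

Lemma gmap_mem (I : {set 'I_n}) k : (k \in gmap I) = (rev_ord k \notin I).
Proof.
rewrite /gmap; apply/imsetP/idP => [[j hj ->]|h]; first by rewrite rev_ordK -in_setC.
by exists (rev_ord k); [rewrite in_setC | rewrite rev_ordK].
Qed.

Lemma gmapK (I : {set 'I_n}) : gmap (gmap I) = I.
Proof. by apply/setP => k; rewrite !gmap_mem rev_ordK negbK. Qed.

Lemma wI_mem (I : {set 'I_n}) q : ((wI I) (false, q)).1 = (q \in I).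
Proof. by have [_ _ _ h] := wI_props I; exact: h. Qed.

Lemma wI_inBn (I : {set 'I_n}) : inBn (wI I).
Proof. by exists (FW (sorted_elems I)); split => //; apply: valid_FW; exact: se_all. Qed.

Lemma G1 (x : SP n) : inBnQ x <-> exists I : {set 'I_n}, x = wI I.
Proof.
split.
  case/inBnQ_iff => hx ha; exists [set q | (x (false, q)).1].
  have [c1 c2 _ _] := wI_props [set q | (x (false, q)).1].
  apply: uniq_chain => //; first exact: inBn_symm.
  - exact: ascg_chain.
  - by move=> q; rewrite wI_mem inE.
case=> I ->; apply/inBnQ_iff; split; first exact: wI_inBn.
by have [c1 _ _ _] := wI_props I; exact: chain_ascg.
Qed.

Lemma alpha_inj : injective (@alpha n).
Proof.
move=> I J e.
have : gmap I = gmap J.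
  by apply/setP => q; rewrite -!wI_mem; move: e; rewrite /alpha => ->.
by move/(congr1 (@gmap n)); rewrite !gmapK.
Qed.

Definition lo s := [set j : 'I_n | nat_of_ord j <= s].

Lemma code_pos (v : T) : (n <= code v) = ~~ v.1.
Proof. case: v => [[] a]; rewrite /code /=; have := ltn_ord a; lia. Qed.

Lemma cnt_alpha (I : {set 'I_n}) s : s < n -> cnt (alpha I) s n = #|lo s :\: I|.
Proof.
move=> hs; rewrite /cnt.
have hinj : injective (fun j : 'I_n => ((true, rev_ord j) : T)).
  move=> j1 j2 e; apply: rev_ord_inj; exact: (congr1 snd e).
rewrite -(card_imset _ hinj); apply: eq_card => -[[] q]; rewrite !inE.
  rewrite [in RHS](_ : ((true, q) : T) = (fun j => (true, rev_ord j)) (rev_ord q)); last by rewrite rev_ordK.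
  rewrite (mem_imset _ _ hinj) !inE code_pos.
  rewrite -[(true, q)]/(negT (false, q)) (@symm_eval n) /= negbK /alpha wI_mem gmap_mem.
  rewrite /code /= andbC; congr andb; apply/idP/idP => /=; lia.
have -> : (code ((false, q) : T) <= s) = false.
  by rewrite /code /=; apply/negbTE; rewrite -ltnNge; lia.
by apply/esym/negP => /imsetP [j _].
Qed.

End Main.


Lemma count_le0 (L : seq nat) x s : ~~ (x <= s) -> all (fun y => x < y) L ->
  count (fun y => y <= s) L = 0.
Proof.
move=> hx /allP ha; rewrite -(count_pred0 L); apply: eq_in_count => y /ha hy /=.
by apply/negbTE; rewrite -ltnNge; move: hx; rewrite -ltnNge => hx; lia.
Qed.

Lemma nth_le_count (L : seq nat) k s : sorted ltn L -> k < size L ->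
  (nth 0 L k <= s) = (k < count (fun y => y <= s) L).
Proof.
elim: L k => [//|x L IH] k hs hk /=.
have hsL : sorted ltn L := path_sorted hs.
have hall : all (fun y => x < y) L := order_path_min ltn_trans hs.
case: k hk => [_|k hk] /=.
  case: (leqP x s) => h //=; by rewrite (count_le0 (x := x)) // -ltnNge.
case: (leqP x s) => h /=; first by rewrite IH.
rewrite (count_le0 (x := x)) ?add0n ?ltn0 //; last by rewrite -ltnNge.
apply/negbTE; rewrite -ltnNge.
have /allP := hall; move=> /(_ (nth 0 L k) (mem_nth 0 (hk : k < size L))) hx'; lia.
Qed.

Lemma count_leq_size (T : Type) (P : pred T) s : count P s <= size s.
Proof. exact: count_size. Qed.

Lemma count_ge0 (L : seq nat) t : all (fun y => y < t) L -> count (fun y => t <= y) L = 0.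
Proof.
move=> /allP ha; rewrite -(count_pred0 L); apply: eq_in_count => y /ha hy /=.
by apply/negbTE; rewrite -ltnNge.
Qed.

Lemma wword_sub a b : a <= b -> subseq (wword a) (wword b).
Proof.
move=> hab; rewrite /wword (_ : b.+1 = a.+1 + (b - a)); last by lia.
by rewrite iotaD rev_cat suffix_subseq.
Qed.

Lemma FW_rcons L a : FW (rcons L a) = FW L ++ wword a.
Proof. by rewrite /FW map_rcons flatten_rcons. Qed.

Lemma subseq_FW (B A : seq nat) : sorted ltn A -> sorted ltn B ->
  (forall t, count (fun y => t <= y) A <= count (fun y => t <= y) B) -> subseq (FW A) (FW B).
Proof.
elim/last_ind: B A => [|B b IH] A hA hB hc.
  have := hc 0; rewrite /= leqn0 (eq_count (a2 := predT)) // count_predT size_eq0 => /eqP ->.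
  by [].
case/lastP: A hA hc => [|A a] hA hc; first by rewrite /FW /= sub0seq.
have [hA' allA] := sorted_rcons_inv hA.
have [hB' allB] := sorted_rcons_inv hB.
have hab : a <= b.
  case: (leqP a b) => // hba; exfalso.
  have := hc a; rewrite -!cats1 !count_cat /= leqnn (leqNgt a b) hba /=.
  rewrite (@count_ge0 B a); first lia.
  by apply/allP => y /(allP allB) /= hy; lia.
rewrite !FW_rcons; apply: cat_subseq; last exact: wword_sub.
apply: IH => // t; have := hc t; rewrite -!cats1 !count_cat /=.
case: (leqP t a) => hta.
  by rewrite (leq_trans hta hab) /=; lia.
by rewrite (@count_ge0 A t) //; apply/allP => y /(allP allA) /= hy; lia.
Qed.


Section Fin.
Variable n : nat.
Local Notation T := (bool * 'I_n)%type.
Local Notation code := (@code n).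
Local Notation lo := (@lo n).

Lemma cnt_set (A : {set 'I_n}) s : count (fun y => y <= s) (sorted_elems A) = #|lo s :&: A|.
Proof. by rewrite se_count; apply: eq_card => j; rewrite !inE andbC. Qed.

Lemma tab_le_CC (I J : {set 'I_n}) :
  tab_le I J <-> (forall s, s < n -> #|lo s :&: J| <= #|lo s :&: I|).
Proof.
split.
  rewrite /tab_le => /orP [/eqP -> | /and3P [hI hcard /allP hk]] s hs.
    by rewrite setI0 cards0.
  rewrite -!cnt_set.
  case m0: (count (fun y => y <= s) (sorted_elems J)) => [//|m'].
  have hm' : m' < size (sorted_elems J) by have := count_size (fun y => y <= s) (sorted_elems J); lia.
  have h1 : nth 0 (sorted_elems J) m' <= s by rewrite nth_le_count ?se_sorted // m0.
  have h2 : kth I m' <= kth J m'.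
    by apply: hk; rewrite mem_iota /= -se_size.
  have hm'' : m' < size (sorted_elems I) by rewrite !se_size in hm' *; lia.
  have : nth 0 (sorted_elems I) m' <= s by rewrite /kth in h2; lia.
  by rewrite nth_le_count ?se_sorted.
move=> hc; rewrite /tab_le; case: (eqVneq J set0) => [->|hJ] //=.

have [j0 hj0] := set0Pn _ hJ.
have hn : 0 < n by case: j0 {hj0} => m hm; lia.
have lofull : forall A : {set 'I_n}, #|lo n.-1 :&: A| = #|A|.
  move=> A; apply: eq_card => j; rewrite !inE.
  by have := ltn_ord j; case: (j \in A); rewrite ?andbT ?andbF //=; lia.
have hcard : #|J| <= #|I| by have := hc n.-1 ltac:(lia); rewrite !lofull.
have hJ0 : 0 < #|J| by rewrite card_gt0.
apply/and3P; split => //.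
  by apply/eqP => hI0; move: hcard; rewrite hI0 cards0; lia.
apply/allP => k; rewrite mem_iota /= => hk.
have hkJ : k < size (sorted_elems J) by rewrite se_size.
set s := kth J k.
have hs : s < n by have := allP (se_all J) _ (mem_nth 0 hkJ).
have h1 : k < count (fun y => y <= s) (sorted_elems J).
  by rewrite -nth_le_count ?se_sorted.
have := hc s hs; rewrite -!cnt_set => h2.
have hkI : k < size (sorted_elems I).
  by have := count_size (fun y => y <= s) (sorted_elems I); lia.
by rewrite /kth nth_le_count ?se_sorted //; lia.
Qed.

Lemma cge_gmap (A : {set 'I_n}) t :
  count (fun y => t <= y) (sorted_elems (gmap A)) = if t < n then #|lo (n - 1 - t) :\: A| else 0.
Proof.
rewrite se_count; case: ltnP => ht.
  rewrite -(card_imset _ (@rev_ord_inj n)); apply: eq_card => j.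
  rewrite inE gmap_mem.
  rewrite [in RHS](_ : j = rev_ord (rev_ord j)); last by rewrite rev_ordK.
  rewrite (mem_imset _ _ (@rev_ord_inj n)) !inE /=.
  by congr andb; have := ltn_ord j; case: (leqP t j); case: (leqP (n - j.+1) (n - 1 - t)); lia.
apply/eqP; rewrite cards_eq0; apply/eqP/setP => j; rewrite !inE.
by have := ltn_ord j; rewrite andbC; case: (leqP t j) => //= h hj; lia.
Qed.

Lemma G5 (I J : {set 'I_n}) : tab_le I J <-> bruhat (alpha I) (alpha J).
Proof.
have cdiff : forall (A : {set 'I_n}) s, #|lo s :&: A| + #|lo s :\: A| = #|lo s|.
  by move=> A s; rewrite cardsID.
split.
  move=> /tab_le_CC hc.
  exists (FW (sorted_elems (gmap J))), (FW (sorted_elems (gmap I))); split => //.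
  - apply/reduced_iff; split; first by apply: valid_FW; exact: se_all.
    by have [_ _ h _] := wI_props (gmap J); rewrite h.
  - apply/reduced_iff; split; first by apply: valid_FW; exact: se_all.
    by have [_ _ h _] := wI_props (gmap I); rewrite h.
  - apply: subseq_FW; rewrite ?se_sorted // => t; rewrite !cge_gmap.
    case: ifP => // ht; have := hc (n - 1 - t) ltac:(lia).
    have := cdiff I (n - 1 - t); have := cdiff J (n - 1 - t); lia.
case=> a [b [ra ea rb eb hsub]].
have [va da] := (@reduced_iff n a).1 ra.
have hP := subword_mono va (esym da) hsub.
rewrite ea eb in hP.
apply/tab_le_CC => s hs; have := hP s n; rewrite !cnt_alpha //.
have := cdiff I s; have := cdiff J s; lia.
Qed.

End Fin.

End Aux.
Import Aux.

Theorem mainTheorem13 (n : nat) :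
  (forall x : SP n, inBnQ x <-> exists I : {set 'I_n}, x = wI I) /\
  (forall I : {set 'I_n}, inBnQ (alpha I)) /\
  (forall x : SP n, inBnQ x -> exists I : {set 'I_n}, alpha I = x) /\
  injective (@alpha n) /\
  (forall I J : {set 'I_n}, tab_le I J <-> bruhat (alpha I) (alpha J)).
Proof.
split; first exact: G1.
split; first by move=> I; apply/G1; exists (gmap I).
split.
  move=> x /G1 [J ->]; exists (gmap J); by rewrite /alpha gmapK.
split; first exact: alpha_inj.
exact: G5.
Qed.
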